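(* Let $n$ be a positive integer and $\alpha,\beta\in\mathbb{R}$. If $\lambda$ is an eigenvalue of $A_n^{\alpha,\beta}$, then \[ |\lambda|\ \le\ T_n\cdot\max\{1,n^{2\beta}\}\cdot\max_{1\le i\le n}|J_{\alpha-\beta}(i)| . \]
   Context: For $i,j$ positive integers, $(i,j)$ denotes the greatest common divisor and $[i,j]$ the least common multiple. For $\alpha,\beta\in\mathbb{R}$ and a positive integer $n$, $A_n^{\alpha,\beta}$ is the $n\times n$ real matrix with $(i,j)$ entry $(i,j)^{\alpha}[i,j]^{\beta}$. $E_n$ is the $n\times n$ matrix with $(E_n)_{ij}=1$ if $j\mid i$ and $(E_n)_{ij}=0$ otherwise; $T_n$ denotes the largest eigenvalue of the symmetric matrix $E_n^{T}E_n$. For real $s$, $J_s$ is the arithmetical function $J_s(k)=k^{s}\prod_{p\mid k}\left(1-p^{-s}\right)$ (product over primes $p$ dividing $k$), equivalently $J_s(k)=\sum_{d\mid k} d^{s}\mu(k/d)$ where $\mu$ is the Möbius function. *)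

(* Defs.v *)
From Stdlib Require Import Reals Arith List ZArith Znumtheory.
Import ListNotations.
Open Scope R_scope.

Definition sumR (n : nat) (f : nat -> R) : R :=
  fold_right Rplus 0 (map f (seq 1 n)).

(* max_{1<=i<=n} f i, for nonnegative f (default 0 for n = 0) *)
Definition maxR (n : nat) (f : nat -> R) : R :=
  fold_right Rmax 0 (map f (seq 1 n)).

(* Matrices are indexed by 1..n: M i j for 1 <= i,j <= n. *)
Definition A_ab (alpha beta : R) (i j : nat) : R :=
  Rpower (INR (Nat.gcd i j)) alpha * Rpower (INR (Nat.lcm i j)) beta.

Definition E_mat (i j : nat) : R :=
  if Nat.eqb (i mod j) 0 then 1 else 0.

Definition EtE (n : nat) (i j : nat) : R :=
  sumR n (fun k => E_mat k i * E_mat k j).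

Definition IsEigenvalue (n : nat) (M : nat -> nat -> R) (lam : R) : Prop :=
  exists x : nat -> R,
    (exists i, (1 <= i <= n)%nat /\ x i <> 0) /\
    forall i, (1 <= i <= n)%nat -> sumR n (fun j => M i j * x j) = lam * x i.

Definition IsLargestEigenvalue (n : nat) (M : nat -> nat -> R) (T : R) : Prop :=
  IsEigenvalue n M T /\ forall mu, IsEigenvalue n M mu -> mu <= T.

Definition Jordan (s : R) (k : nat) : R :=
  Rpower (INR k) s *
  fold_right Rmult 1
    (map (fun p => if prime_dec (Z.of_nat p) then
                     if Nat.eqb (k mod p) 0 then 1 - Rpower (INR p) (- s) else 1
                   else 1)
         (seq 1 k)).

(* Main.v *)
Require Import Defs.
From Stdlib Require Import Reals Lra Lia List Arith ZArith Znumtheory.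
Open Scope R_scope.

Lemma sumR_0n f : sumR 0 f = 0.
Proof. reflexivity. Qed.

Lemma sumR_S n f : sumR (S n) f = sumR n f + f (S n).
Proof.
  unfold sumR. rewrite seq_S, map_app, fold_right_app. simpl.
  replace (1 + n)%nat with (S n) by lia.
  generalize (f (S n)). intro c.
  induction (map f (seq 1 n)) as [|a l IH]; simpl; [lra|]. rewrite IH. lra.
Qed.

Lemma sumR_ext n f g : (forall i, (1 <= i <= n)%nat -> f i = g i) -> sumR n f = sumR n g.
Proof.
  induction n; intros H; [reflexivity|]. rewrite !sumR_S. rewrite IHn by (intros; apply H; lia).
  rewrite H by lia. reflexivity.
Qed.

Lemma sumR_plus n f g : sumR n (fun i => f i + g i) = sumR n f + sumR n g.
Proof. induction n; [simpl; unfold sumR; simpl; lra|]. rewrite !sumR_S, IHn. lra. Qed.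

Lemma sumR_scal n c f : sumR n (fun i => c * f i) = c * sumR n f.
Proof. induction n; [unfold sumR; simpl; lra|]. rewrite !sumR_S, IHn. lra. Qed.

Lemma sumR_zero n f : (forall i, (1 <= i <= n)%nat -> f i = 0) -> sumR n f = 0.
Proof. induction n; intros H; [reflexivity|]. rewrite sumR_S, IHn, H by (intros; try apply H; lia). lra. Qed.

Lemma sumR_le n f g : (forall i, (1 <= i <= n)%nat -> f i <= g i) -> sumR n f <= sumR n g.
Proof. induction n; intros H; [unfold sumR; simpl; lra|]. rewrite !sumR_S.
  assert (sumR n f <= sumR n g) by (apply IHn; intros; apply H; lia).
  assert (f (S n) <= g (S n)) by (apply H; lia). lra. Qed.

Lemma sumR_nonneg n f : (forall i, (1 <= i <= n)%nat -> 0 <= f i) -> 0 <= sumR n f.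
Proof. intros H. rewrite <- (sumR_zero n (fun _ => 0)) by auto. apply sumR_le. auto. Qed.

Lemma sumR_swap n m (F : nat -> nat -> R) :
  sumR n (fun i => sumR m (fun j => F i j)) = sumR m (fun j => sumR n (fun i => F i j)).
Proof.
  induction n; [rewrite sumR_0n, sumR_zero; auto|].
  rewrite sumR_S, IHn, <- sumR_plus. apply sumR_ext. intros. rewrite sumR_S. reflexivity.
Qed.

Lemma sumR_delta n i f : (1 <= i <= n)%nat ->
  sumR n (fun j => if Nat.eqb i j then f j else 0) = f i.
Proof.
  induction n; intros Hi; [lia|]. rewrite sumR_S.
  destruct (Nat.eq_dec i (S n)) as [->|Hne].
  - rewrite sumR_zero. rewrite Nat.eqb_refl. lra.
    intros j Hj. destruct (Nat.eqb_spec (S n) j); [lia|auto].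
  - rewrite IHn by lia. destruct (Nat.eqb_spec i (S n)); [lia|lra].
Qed.

Lemma sumR_delta' n i f : (1 <= i <= n)%nat ->
  sumR n (fun j => if Nat.eqb j i then f j else 0) = f i.
Proof. intros. rewrite <- (sumR_delta n i f) by auto. apply sumR_ext. intros j _.
  rewrite Nat.eqb_sym. reflexivity. Qed.

Lemma sumR_single_le n f i : (forall k, (1 <= k <= n)%nat -> 0 <= f k) -> (1 <= i <= n)%nat ->
  f i <= sumR n f.
Proof.
  intros H Hi. rewrite <- (sumR_delta n i f) at 1 by auto. apply sumR_le. intros j Hj.
  destruct (Nat.eqb i j); [lra|auto].
Qed.

Lemma sumR_abs n f : Rabs (sumR n f) <= sumR n (fun i => Rabs (f i)).
Proof. induction n; [unfold sumR; simpl; rewrite Rabs_R0; lra|]. rewrite !sumR_S.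
  eapply Rle_trans; [apply Rabs_triang|]. lra. Qed.

Definition bil n (F : nat -> nat -> R) (u v : nat -> R) : R :=
  sumR n (fun i => u i * sumR n (fun j => F i j * v j)).
Definition nrm n (v : nat -> R) : R := sumR n (fun i => v i * v i).

Lemma bil_addl n F u v w t : bil n F (fun i => u i + t * v i) w = bil n F u w + t * bil n F v w.
Proof. unfold bil. rewrite <- sumR_scal, <- sumR_plus. apply sumR_ext; intros; ring. Qed.

Lemma bil_addr n F u v w t : bil n F w (fun i => u i + t * v i) = bil n F w u + t * bil n F w v.
Proof. unfold bil. rewrite <- sumR_scal, <- sumR_plus. apply sumR_ext; intros.
  replace (sumR n (fun j => F i j * (u j + t * v j))) with
    (sumR n (fun j => F i j * u j) + t * sumR n (fun j => F i j * v j)).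
  ring. rewrite <- sumR_scal, <- sumR_plus. apply sumR_ext; intros; ring. Qed.

Lemma bil_sym n F u v : (forall i j, (1<=i<=n)%nat -> (1<=j<=n)%nat -> F i j = F j i) ->
  bil n F u v = bil n F v u.
Proof. intros HF. unfold bil.
  transitivity (sumR n (fun i => sumR n (fun j => u i * F i j * v j))).
  { apply sumR_ext; intros. rewrite <- sumR_scal. apply sumR_ext; intros; ring. }
  rewrite sumR_swap.
  apply sumR_ext; intros. rewrite <- sumR_scal. apply sumR_ext; intros. rewrite HF by auto. ring.
Qed.

Lemma nrm_nonneg n v : 0 <= nrm n v.
Proof. apply sumR_nonneg. intros. nra. Qed.

Lemma nrm_coord n v i : (1 <= i <= n)%nat -> v i * v i <= nrm n v.
Proof. intros. apply (sumR_single_le n (fun i => v i * v i)); auto. intros; nra. Qed.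

Lemma nrm_zero n v : nrm n v = 0 -> forall i, (1 <= i <= n)%nat -> v i = 0.
Proof. intros H i Hi. pose proof (nrm_coord n v i Hi). pose proof (nrm_nonneg n v). nra. Qed.

Lemma quad (a b c : R) : 0 <= a -> (forall t, 0 <= a * t * t + 2 * b * t + c) -> b * b <= a * c.
Proof.
  intros Ha H. destruct (Req_dec a 0) as [->|Hn].
  - destruct (Req_dec b 0) as [->|Hb]; [lra|].
    specialize (H (- (c + 1) / (2 * b))).
    replace (0 * (- (c + 1) / (2 * b)) * (- (c + 1) / (2 * b)) + 2 * b * (- (c + 1) / (2 * b)) + c) with (-1) in H by (field; auto). lra.
  - specialize (H (- b / a)).
    replace (a * (- b / a) * (- b / a) + 2 * b * (- b / a) + c) with (c - b * b / a) in H by (field; auto).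
    assert (0 < a) by lra.
    assert (b * b / a <= c) by lra.
    apply Rmult_le_compat_l with (r := a) in H1; [|lra].
    replace (a * (b * b / a)) with (b * b) in H1 by (field; auto). lra.
Qed.

Lemma cs_form n F u v :
  (forall i j, (1<=i<=n)%nat -> (1<=j<=n)%nat -> F i j = F j i) ->
  (forall w, 0 <= bil n F w w) ->
  bil n F u v * bil n F u v <= bil n F v v * bil n F u u.
Proof.
  intros Hs Hp. apply quad; [apply Hp|]. intros t.
  specialize (Hp (fun i => u i + t * v i)).
  rewrite bil_addl, !bil_addr in Hp. rewrite (bil_sym n F v u Hs) in Hp. nra.
Qed.

Lemma qf_bound n F v : bil n F v v <= sumR n (fun i => sumR n (fun j => Rabs (F i j))) * nrm n v.
Proof.
  unfold bil. rewrite Rmult_comm, <- sumR_scal. apply sumR_le. intros i Hi.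
  rewrite <- sumR_scal, <- sumR_scal. apply sumR_le. intros j Hj.
  pose proof (nrm_coord n v i Hi). pose proof (nrm_coord n v j Hj).
  assert (Habs : v i * (F i j * v j) <= Rabs (F i j) * Rabs (v i * v j)).
  { rewrite <- Rabs_mult. replace (v i * (F i j * v j)) with (F i j * (v i * v j)) by ring. apply Rle_abs. }
  assert (Rabs (v i * v j) <= nrm n v).
  { rewrite Rabs_mult. pose proof (Rabs_pos (v i)). pose proof (Rabs_pos (v j)).
    assert (Rabs (v i) * Rabs (v i) = v i * v i) by (rewrite <- Rabs_mult; apply Rabs_pos_eq; nra).
    assert (Rabs (v j) * Rabs (v j) = v j * v j) by (rewrite <- Rabs_mult; apply Rabs_pos_eq; nra).
    nra. }
  pose proof (Rabs_pos (F i j)). nra.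
Qed.

Definition dichotomy_stmt := forall n (B : nat -> nat -> R),
  (exists v, (exists i, (1 <= i <= n)%nat /\ v i <> 0) /\
      forall i, (1 <= i <= n)%nat -> sumR n (fun j => B i j * v j) = 0) \/
  (exists C, forall i j, (1 <= i <= n)%nat -> (1 <= j <= n)%nat ->
      sumR n (fun k => B i k * C k j) = if Nat.eqb i j then 1 else 0).

Definition e1 (i : nat) : R := if Nat.eqb i 1 then 1 else 0.

Lemma e1_nrm n : (1 <= n)%nat -> nrm n e1 = 1.
Proof. intros. unfold nrm. rewrite <- (sumR_delta' n 1 (fun _ => 1)) by lia.
  apply sumR_ext. intros i _. unfold e1. destruct (Nat.eqb i 1); ring. Qed.

Lemma e1_bil n F : (1 <= n)%nat -> bil n F e1 e1 = F 1%nat 1%nat.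
Proof. intros. unfold bil.
  assert (Hin : forall i, sumR n (fun j => F i j * e1 j) = F i 1%nat).
  { intro i. rewrite <- (sumR_delta' n 1 (fun j => F i j)) by lia.
    apply sumR_ext. intros j _. unfold e1. destruct (Nat.eqb j 1); ring. }
  rewrite <- (sumR_delta' n 1 (fun i => F i 1%nat)) by lia.
  apply sumR_ext. intros i _. rewrite Hin. unfold e1. destruct (Nat.eqb i 1); ring. Qed.

Lemma rayleigh (DI : dichotomy_stmt) n (M : nat -> nat -> R) T :
  (1 <= n)%nat ->
  (forall i j, (1<=i<=n)%nat -> (1<=j<=n)%nat -> M i j = M j i) ->
  IsLargestEigenvalue n M T ->
  forall v, bil n M v v <= T * nrm n v.
Proof.
  intros Hn Hs [_ HT].
  set (U := fun t => forall v, bil n M v v <= t * nrm n v).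
  set (K0 := sumR n (fun i => sumR n (fun j => Rabs (M i j)))).
  assert (UK0 : U K0) by (intro v; apply qf_bound).
  assert (Ulow : forall t, U t -> M 1%nat 1%nat <= t).
  { intros t Ht. specialize (Ht e1). rewrite e1_bil, e1_nrm in Ht by auto. lra. }
  destruct (completeness (fun r => U (- r))) as [m [Hub Hlub]].
  { exists (- M 1%nat 1%nat). intros r Hr. apply Ulow in Hr. lra. }
  { exists (- K0). rewrite Ropp_involutive. auto. }
  set (mu := - m).
  assert (Hmu_le : forall t, U t -> mu <= t).
  { intros t Ht. assert (- t <= m) by (apply Hub; rewrite Ropp_involutive; auto). unfold mu; lra. }
  assert (Hmu_approx : forall t', mu < t' -> exists t, U t /\ t < t').
  { intros t' Ht'. apply Classical_Prop.NNPP. intro Hno.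
    assert (m <= - t').
    { apply Hlub. intros r Hr. destruct (Rle_dec r (- t')) as [|Hgt]; auto.
      exfalso. apply Hno. exists (- r). split; auto. lra. }
    unfold mu in Ht'. lra. }
  assert (Q0 : forall v, nrm n v = 0 -> bil n M v v = 0).
  { intros v Hv. unfold bil. apply sumR_zero. intros i Hi. rewrite (nrm_zero n v Hv i Hi). ring. }
  assert (Umu : U mu).
  { intro v. destruct (Rle_dec (bil n M v v) (mu * nrm n v)) as [|Hgt]; auto. exfalso.
    pose proof (nrm_nonneg n v).
    destruct (Req_dec (nrm n v) 0) as [H0|H0].
    { rewrite Q0 in Hgt by auto. rewrite H0 in Hgt. lra. }
    assert (Hpos : 0 < nrm n v) by lra.
    destruct (Hmu_approx (bil n M v v / nrm n v)) as [t [Ht Htlt]].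
    { apply Rmult_lt_reg_r with (nrm n v); auto. unfold Rdiv. rewrite Rmult_assoc, Rinv_l; lra. }
    specialize (Ht v).
    apply Rmult_lt_compat_r with (r := nrm n v) in Htlt; auto.
    unfold Rdiv in Htlt. rewrite Rmult_assoc, Rinv_l in Htlt; lra. }
  set (B := fun i j => (if Nat.eqb i j then mu else 0) - M i j).
  assert (HBs : forall i j, (1<=i<=n)%nat -> (1<=j<=n)%nat -> B i j = B j i).
  { intros i j Hi Hj. unfold B. rewrite Nat.eqb_sym, Hs by auto. reflexivity. }
  assert (HBrow : forall i w, (1<=i<=n)%nat ->
     sumR n (fun j => B i j * w j) = mu * w i - sumR n (fun j => M i j * w j)).
  { intros i w Hi. transitivity (sumR n (fun j => (if Nat.eqb i j then mu * w j else 0) + -1 * (M i j * w j))).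
    { apply sumR_ext; intros j Hj. unfold B. destruct (Nat.eqb i j); ring. }
    rewrite sumR_plus, sumR_delta, sumR_scal by auto. ring. }
  assert (HBv : forall u w, bil n B u w = mu * sumR n (fun i => u i * w i) - bil n M u w).
  { intros u w. unfold bil.
    transitivity (sumR n (fun i => mu * (u i * w i) + -1 * (u i * sumR n (fun j => M i j * w j)))).
    { apply sumR_ext; intros i Hi. rewrite HBrow by auto. ring. }
    rewrite sumR_plus, !sumR_scal. ring. }
  assert (HBp : forall w, 0 <= bil n B w w).
  { intro w. rewrite HBv. specialize (Umu w). unfold nrm in Umu. lra. }
  destruct (DI n B) as [[v [[i0 [Hi0 Hv0]] Hker]] | [C HC]].
  -
    assert (Heig : IsEigenvalue n M mu).
    { exists v. split; [exists i0; auto|]. intros i Hi. specialize (Hker i Hi).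
      rewrite HBrow in Hker by auto.
      lra. }
    apply HT in Heig. intros w. specialize (Umu w). pose proof (nrm_nonneg n w). nra.
  - exfalso.
    set (K := sumR n (fun i => sumR n (fun j => Rabs (C i j)))).
    assert (Key : forall x, nrm n x * nrm n x <= bil n B x x * (K * nrm n x)).
    { intro x. set (z := fun k => sumR n (fun j => C k j * x j)).
      assert (Bz : forall i, (1<=i<=n)%nat -> sumR n (fun k => B i k * z k) = x i).
      { intros i Hi. unfold z.
        transitivity (sumR n (fun k => sumR n (fun j => B i k * C k j * x j))).
        { apply sumR_ext. intros k _. rewrite <- sumR_scal. apply sumR_ext; intros; ring. }
        rewrite sumR_swap.
        transitivity (sumR n (fun j => if Nat.eqb i j then x j else 0)).
        2: apply sumR_delta; auto.
        apply sumR_ext. intros j Hj.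
        transitivity (sumR n (fun k => B i k * C k j) * x j).
        { rewrite Rmult_comm, <- sumR_scal. apply sumR_ext; intros; ring. }
        rewrite HC by auto. destruct (Nat.eqb i j); ring. }
      assert (Hxz : bil n B x z = nrm n x).
      { unfold bil, nrm. apply sumR_ext. intros i Hi. rewrite Bz; auto. }
      assert (Hzz : bil n B z z = bil n C x x).
      { unfold bil. transitivity (sumR n (fun i => z i * x i)).
        apply sumR_ext; intros i Hi; rewrite Bz; auto.
        apply sumR_ext; intros i Hi. unfold z. ring. }
      pose proof (cs_form n B x z HBs HBp). rewrite Hxz, Hzz in H.
      pose proof (qf_bound n C x). fold K in H0.
      pose proof (HBp x). nra. }
    assert (HK : 0 < K).
    { pose proof (Key e1). rewrite e1_nrm in H by auto.
      assert (0 <= K) by (apply sumR_nonneg; intros; apply sumR_nonneg; intros; apply Rabs_pos).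
      destruct (Req_dec K 0); [|lra]. rewrite H1 in H. lra. }
    assert (Hcontra : U (mu - / K)).
    { intro x. pose proof (Key x) as Kx. rewrite HBv in Kx. fold (nrm n x) in Kx.
      pose proof (nrm_nonneg n x) as Nn.
      destruct (Req_dec (nrm n x) 0) as [N0|N0].
      { rewrite Q0 by auto. rewrite N0. lra. }
      assert (Np : 0 < nrm n x) by lra.
      assert (S1 : nrm n x <= (mu * nrm n x - bil n M x x) * K).
      { apply Rmult_le_reg_r with (nrm n x); auto. nra. }
      assert (S2 : nrm n x / K <= mu * nrm n x - bil n M x x).
      { unfold Rdiv. apply Rmult_le_reg_r with K; auto. rewrite Rmult_assoc, Rinv_l; lra. }
      unfold Rdiv in S2. nra. }
    apply Hmu_le in Hcontra. assert (0 < / K) by (apply Rinv_0_lt_compat; auto). lra.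
Qed.

From mathcomp Require all_boot all_algebra Rstruct.

Module MC.
Import all_boot all_algebra Rstruct.
Import GRing.Theory.
Local Open Scope ring_scope.

Lemma foldR_big k n (f : nat -> R) :
  fold_right Rplus 0%R (map f (List.seq k n)) = \sum_(i < n) f (k + i)%N.
Proof.
  elim: n k => [|n IH] k; first by rewrite big_ord0.
  rewrite big_ord_recl /= IH addn0. congr (_ + _). apply: eq_bigr => i _.
  by rewrite /= addSnnS.
Qed.

Lemma sumR_big n f : sumR n f = \sum_(i < n) f i.+1.
Proof. by rewrite /sumR foldR_big. Qed.

Lemma dichotomy n (B : nat -> nat -> R) :
  (exists v, (exists i, (le 1 i /\ le i n) /\ v i <> 0%R) /\
      forall i, (le 1 i /\ le i n) -> sumR n (fun j => B i j * v j)%R = 0%R) \/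
  (exists C, forall i j, (le 1 i /\ le i n) -> (le 1 j /\ le j n) ->
      sumR n (fun k => B i k * C k j)%R = if Nat.eqb i j then 1%R else 0%R).
Proof.
  case: n => [|n].
    right. exists (fun _ _ => 0%R) => i j Hi. exfalso. lia.
  pose M : 'M[R]_n.+1 := \matrix_(i < n.+1, j < n.+1) B j.+1 i.+1.
  have [Mu|Mnu] := boolP (M \in unitmx).
  - right. pose Ci := invmx M.
    exists (fun k j => Ci (inord j.-1) (inord k.-1)).
    move=> i j Hi Hj.
    have := mulVmx Mu. move/matrixP => /(_ (inord j.-1) (inord i.-1)).
    rewrite !mxE => H.
    have iK : (inord i.-1 : 'I_n.+1) = i.-1 :> nat by rewrite inordK //; apply/ltP; lia.
    have jK : (inord j.-1 : 'I_n.+1) = j.-1 :> nat by rewrite inordK //; apply/ltP; lia.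
    rewrite sumR_big.
    have -> : (if Nat.eqb i j then 1 else 0) = (inord j.-1 == inord i.-1 :> 'I_n.+1)%:R :> R.
      case: (Nat.eqb_spec i j) => [->|ne]; first by rewrite eqxx.
      have : (inord j.-1 : 'I_n.+1) != inord i.-1.
        apply/eqP => E. apply: ne. have := congr1 val E. rewrite /= iK jK. lia.
      by move/negPf => ->.
    rewrite -H. apply: eq_bigr => k _. rewrite mxE iK.
    have -> : i.-1.+1 = i by lia.
    by rewrite mulrC /= inord_val.
  - left.
    have : \det M == 0 by rewrite unitmxE unitfE negbK in Mnu.
    case/det0P => v nz vM.
    exists (fun i => v 0 (inord i.-1)). split.
    + have : exists k : 'I_n.+1, v 0 k != 0.
        apply/existsP. apply: contraNT nz => /existsPn H0.
        apply/eqP/matrixP => a b. rewrite ord1 mxE. by move/negbNE/eqP: (H0 b).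
      case=> k Hk. exists k.+1. split; first by split; [lia| have := ltn_ord k; move/ltP; lia].
      apply/eqP. by rewrite /= inord_val.
    + move=> i Hi. move/matrixP: vM => /(_ 0 (inord i.-1)). rewrite !mxE => H.
      have iK : (inord i.-1 : 'I_n.+1) = i.-1 :> nat by rewrite inordK //; apply/ltP; lia.
      rewrite sumR_big. rewrite -[RHS]H. apply: eq_bigr => k _. rewrite mxE iK.
      have -> : i.-1.+1 = i by lia.
      by rewrite mulrC /= inord_val.
Qed.
End MC.

From mathcomp Require all_boot zify Rstruct.

Lemma INR_pos k : (0 < k)%nat -> 0 < INR k.
Proof. intros. apply lt_0_INR. auto. Qed.

Lemma rp_mul s a b : (0 < a)%nat -> (0 < b)%nat ->
  Rpower (INR (a * b)) s = Rpower (INR a) s * Rpower (INR b) s.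
Proof. intros. rewrite mult_INR, Rpower_mult_distr; auto using INR_pos. Qed.

Lemma rp_inv s p : (0 < p)%nat -> Rpower (INR p) s * Rpower (INR p) (- s) = 1.
Proof. intros. rewrite <- Rpower_plus. replace (s + - s) with 0 by ring. apply Rpower_O, INR_pos; auto. Qed.

Lemma rp_one s : Rpower (INR 1) s = 1.
Proof. unfold Rpower. simpl. rewrite ln_1, Rmult_0_r. apply exp_0. Qed.

Lemma combine_step (rs q1s ps pis : R) : ps * pis = 1 ->
  rs * q1s + rs * (q1s * ps * (1 - pis)) = rs * (q1s * ps).
Proof. intros H. replace (rs * (q1s * ps * (1 - pis))) with (rs * q1s * ps - rs * q1s * (ps * pis)) by ring.
  rewrite H. ring. Qed.

Module JMC.
Import all_boot zify Rstruct.

Lemma Zdiv_bridge d p : Z.divide (Z.of_nat d) (Z.of_nat p) <-> Nat.divide d p.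
Proof. split.
  - move=> [z Hz]. case: (Nat.eq_dec d 0) => [E|E].
    + subst d. exists 0%N. lia.
    + have : (0 <= z)%Z by nia. move=> z0. exists (Z.to_nat z). lia.
  - move=> [k Hk]. exists (Z.of_nat k). lia.
Qed.
Lemma dvd_bridge d p : (d %| p) <-> Nat.divide d p.
Proof. split. move/dvdnP=> [k ->]. by exists k. move=> [k ->]. apply/dvdnP. by exists k. Qed.
Lemma primeZ p : Znumtheory.prime (Z.of_nat p) <-> is_true (prime p).
Proof.
  rewrite -prime_alt. split.
  - move=> [H1 H2]. apply/primeP. split; first lia.
    move=> d Hd. have dp : (d <= p)%N by apply: dvdn_leq => //; lia.
    have d0 : (0 < d)%N by case: d Hd dp => //; rewrite dvd0n; move/eqP => E; lia.
    apply/orP. case: (ltnP 1 d) => [d1|d1]; last by left; apply/eqP; lia.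
    case: (ltnP d p) => [dlt|dge]; last by right; apply/eqP; lia.
    exfalso. apply: (H2 (Z.of_nat d)); first lia.
    apply/Zdiv_bridge. by apply/dvd_bridge.
  - move/primeP => [H1 H2]. split; first lia.
    move=> z Hz Hd. have := H2 (Z.to_nat z).
    have : (Z.to_nat z %| p).
      apply/dvd_bridge. apply/Zdiv_bridge. by rewrite Z2Nat.id; [|lia].
    move=> -> /(_ isT) /orP [] /eqP; lia.
Qed.
Lemma modn_bridge i j : (0 < j)%N -> Nat.modulo i j = i %% j.
Proof. move=> Hj. symmetry. apply: (Nat.mod_unique i j (i %/ j)).
  all: have := ltn_pmod i Hj; have := divn_eq i j; lia. Qed.
Lemma eqb_dvd k p : (0 < p)%N -> Nat.eqb (k mod p) 0 = (p %| k).
Proof. move=> Hp. by rewrite modn_bridge. Qed.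

Lemma fold_big (op : R -> R -> R) idx k n (f : nat -> R) :
  fold_right op idx (map f (List.seq k n)) = \big[op/idx]_(i < n) f (k + i)%N.
Proof.
  elim: n k => [|n IH] k; first by rewrite big_ord0.
  rewrite big_ord_recl /= IH addn0. congr (op _ _). apply: eq_bigr => i _.
  by rewrite /= addSnnS.
Qed.

Definition phiJ s k p : R := if prime p && (p %| k) then (1 - Rpower (INR p) (-s)) else 1.
Definition PkJ s N k := \big[Rmult/1]_(i < N) phiJ s k i.+1.
Definition JmJ s N k := (Rpower (INR k) s * PkJ s N k).

Lemma Jordan_Pk s k : Jordan s k = (Rpower (INR k) s * PkJ s k k).
Proof.
  rewrite /Jordan fold_big /PkJ. congr (_ * _). apply: eq_bigr => i _.
  rewrite /phiJ add1n.
  case: (prime_dec (Z.of_nat i.+1)) => [P|P].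
  - have P' := proj1 (primeZ _) P. rewrite P' eqb_dvd //.
  - have P' : ~~ prime i.+1 by apply/negP => H; apply: P; apply/primeZ.
    by rewrite (negPf P').
Qed.

Lemma Pk_ext s N k : (0 < k)%N -> (k <= N)%N -> PkJ s N k = PkJ s k k.
Proof.
  move=> k0. elim: N => [|N IH] kN; first by lia.
  case: (ltnP k N.+1) => [lt|ge]; last first.
    have -> : N.+1 = k by lia. done.
  rewrite /PkJ big_ord_recr /= -/(PkJ s N k) IH; last by lia.
  rewrite /phiJ. have -> : (N.+1 %| k) = false.
    apply/negP => H. have := dvdn_leq k0 H. lia.
  by rewrite andbF Rmult_1_r.
Qed.

Lemma Jordan_Jm s N k : (0 < k)%N -> (k <= N)%N -> Jordan s k = JmJ s N k.
Proof. move=> k0 kN. by rewrite Jordan_Pk /JmJ Pk_ext. Qed.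

Lemma Pk_mul s N a b : coprime a b -> PkJ s N (a * b) = (PkJ s N a * PkJ s N b).
Proof.
  move=> cab. rewrite /PkJ -big_split /=. apply: eq_bigr => i _.
  rewrite /phiJ. case: (boolP (prime i.+1)) => /= [P|_]; last by rewrite Rmult_1_r.
  rewrite Euclid_dvdM //.
  case: (boolP (i.+1 %| a)) => da; case: (boolP (i.+1 %| b)) => db /=; try by rewrite ?Rmult_1_r ?Rmult_1_l.
  exfalso. have : i.+1 %| gcdn a b by rewrite dvdn_gcd da db.
  move/eqP: cab => ->. rewrite dvdn1. have := prime_gt1 P. lia.
Qed.

Lemma Jm_mul s N a b : (0 < a)%N -> (0 < b)%N -> coprime a b ->
  JmJ s N (a * b) = (JmJ s N a * JmJ s N b).
Proof. move=> a0 b0 cab. rewrite /JmJ Pk_mul // rp_mul; [ring|exact/ltP|exact/ltP]. Qed.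

Lemma Pk_pexp s N p a : prime p -> (0 < a)%N -> (p <= N)%N ->
  PkJ s N (p ^ a) = (1 - Rpower (INR p) (-s)).
Proof.
  move=> P a0 pN. have p1 := prime_gt1 P.
  have pN' : (p.-1 < N)%N by lia.
  rewrite /PkJ (bigD1 (Ordinal pN')) //=.
  rewrite big1 ?Rmult_1_r.
  - rewrite /phiJ. have -> : p.-1.+1 = p by lia. by rewrite P Euclid_dvdX // dvdnn a0.
  - move=> i Hi. rewrite /phiJ. case: (boolP (prime i.+1)) => //= Pi.
    rewrite Euclid_dvdX // dvdn_prime2 // a0 andbT.
    case: eqP => // E. exfalso. move/negP: Hi; apply. apply/eqP. apply: val_inj => /=. lia.
Qed.
Lemma Jm1 s N : JmJ s N 1 = 1.
Proof.
  rewrite /JmJ rp_one /PkJ big1 ?Rmult_1_r // => i _.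
  rewrite /phiJ. case: (boolP (prime i.+1)) => //= Pi.
  rewrite dvdn1. by have := prime_gt1 Pi; case: eqP => // ->.
Qed.

Lemma divsum s N g : (0 < g)%N -> (g <= N)%N ->
  \big[Rplus/0]_(d <- divisors g) JmJ s N d = Rpower (INR g) s.
Proof.
  elim/ltn_ind: g => g IH g0 gN.
  case: (ltnP 1 g) => [g1|g1]; last first.
    have -> : g = 1%N by lia. by rewrite big_seq1 Jm1 rp_one.
  have P := pdiv_prime g1. set p := pdiv g in P *.
  have p1 := prime_gt1 P.
  have pg : p %| g by apply: pdiv_dvd.
  have [r cpr gE] := pfactor_coprime P g0.
  set a := logn p g in gE.
  have a0 : (0 < a)%N by rewrite /a logn_gt0 mem_primes P g0 pg.
  set q1 := (p ^ a.-1)%N.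
  have qE : (p ^ a = q1 * p)%N by rewrite /q1 -{1}(prednK a0) expnS mulnC.
  have q10 : (0 < q1)%N by rewrite /q1 expn_gt0; lia.
  have r0 : (0 < r)%N by move: g0; rewrite gE; case: r {cpr gE} => //.
  have gpE : (g %/ p = r * q1)%N by rewrite gE qE mulnA mulnK //; lia.
  have gE' : (g = r * (q1 * p))%N by rewrite gE qE.
  rewrite (bigID (fun d => d %| g %/ p)) /=.
  have S1 : \big[Rplus/0]_(d <- divisors g | d %| g %/ p) JmJ s N d =
            \big[Rplus/0]_(d <- divisors (g %/ p)) JmJ s N d.
    rewrite -big_filter. apply: perm_big. apply: uniq_perm.
    - exact: filter_uniq (divisors_uniq g).
    - exact: divisors_uniq.
    - move=> d. rewrite mem_filter -!dvdn_divisors //; last by rewrite gpE muln_gt0 r0 q10.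
      apply/andP/idP => [[]//|H]. split => //. exact: dvdn_trans H (dvdn_div pg).
  have S2 : \big[Rplus/0]_(d <- divisors g | ~~ (d %| g %/ p)) JmJ s N d =
            \big[Rplus/0]_(u <- divisors r) JmJ s N (u * (q1 * p))%N.
    rewrite -big_filter -(big_map (fun u => (u * (q1 * p))%N) xpredT). apply: perm_big. apply: uniq_perm.
    - exact: filter_uniq (divisors_uniq g).
    - rewrite map_inj_uniq; first exact: divisors_uniq.
      move=> u v /eqP. rewrite eqn_pmul2r; [by move/eqP| lia].
    - move=> d. rewrite mem_filter. apply/andP/mapP.
      + move=> [nd]. rewrite -dvdn_divisors // => dg.
        have d0 : (0 < d)%N by apply: dvdn_gt0 dg.
        have [v cpv dE] := pfactor_coprime P d0.
        set b := logn p d in dE.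
        have vr : v %| r.
          have : (v %| r * p ^ a)%N by rewrite -gE; apply: dvdn_trans dg; rewrite dE dvdn_mulr.
          by rewrite Gauss_dvdl // coprimeXr // coprime_sym.
        have ba : (b <= a)%N.
          have : (p ^ b %| r * p ^ a)%N by rewrite -gE; apply: dvdn_trans dg; rewrite dE dvdn_mull.
          rewrite Gauss_dvdr; last by rewrite coprimeXl.
          by rewrite dvdn_Pexp2l.
        case: (ltnP b a) => [ltba|geba].
          exfalso. move/negP: nd; apply. rewrite gpE dE /q1.
          apply: dvdn_mul => //. apply: dvdn_exp2l. lia.
        exists v; first by rewrite -dvdn_divisors.
        rewrite dE -qE. have -> : b = a by lia. done.
      + move=> [u ur ->]. rewrite -!dvdn_divisors // in ur *. split; last first.
          by rewrite gE' dvdn_mul.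
        apply/negP. rewrite gpE mulnA => H.
        have : (u * p %| r)%N by move: H; rewrite -mulnA [(q1 * p)%N]mulnC mulnA dvdn_pmul2r.
        move=> upr. have pr : p %| r by apply: dvdn_trans upr; apply: dvdn_mull.
        have : p %| gcdn p r by rewrite dvdn_gcd dvdnn pr.
        move/eqP: cpr => ->. rewrite dvdn1. lia.
  rewrite S1 S2.
  have S3 : \big[Rplus/0]_(u <- divisors r) JmJ s N (u * (q1 * p))%N =
            (\big[Rplus/0]_(u <- divisors r) JmJ s N u) * JmJ s N (q1 * p)%N.
    rewrite big_distrl /=. rewrite big_seq [in RHS]big_seq. apply: eq_bigr => u.
    rewrite -dvdn_divisors // => ur. apply: Jm_mul => //.
    + exact: dvdn_gt0 ur.
    + lia.
    + rewrite -qE. have cr : coprime r (p ^ a) by rewrite coprime_sym; apply: coprimeXl.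
      exact: coprime_dvdl ur cr.
  have pleg : (p <= g)%N by apply: dvdn_leq.
  have IH1 := IH r ltac:(rewrite gE'; nia) r0 ltac:(rewrite gE' in gN; nia).
  have IH2 := IH (g %/ p) ltac:(apply: ltn_Pdiv => //) ltac:(rewrite gpE; nia)
     ltac:(have := leq_div g p; lia).
  rewrite S3 IH1 IH2.
  rewrite gpE /JmJ -qE Pk_pexp //; last lia.
  rewrite qE gE'.
  rewrite !rp_mul; try (apply/ltP; lia).
  apply: combine_step. apply: rp_inv. apply/ltP; lia.
Qed.
Lemma fold_seq (op : R -> R -> R) idx (l : list nat) (f : nat -> R) :
  fold_right op idx (map f l) = \big[op/idx]_(x <- l) f x.
Proof. elim: l => [|x l IH]; first by rewrite big_nil. by rewrite big_cons /= IH. Qed.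

Lemma seq_iota a b : List.seq a b = iota a b.
Proof. elim: b a => [|b IH] a //=; by rewrite IH. Qed.

Lemma jordan_divsum_mc s g N : (0 < g)%N -> (g <= N)%N ->
  sumR N (fun d => if Nat.eqb (g mod d) 0 then Jordan s d else 0) = Rpower (INR g) s.
Proof.
  move=> g0 gN. rewrite /sumR fold_seq seq_iota.
  transitivity (\big[Rplus/0]_(d <- iota 1 N | d %| g) Jordan s d).
    rewrite [in RHS]big_mkcond big_seq [in RHS]big_seq. apply: eq_bigr => d.
    rewrite mem_iota => /andP [d1 _]. by rewrite eqb_dvd.
  rewrite -big_filter.
  rewrite (perm_big _ (_ : perm_eq _ (divisors g))); last first.
    apply: uniq_perm.
    - exact: filter_uniq (iota_uniq 1 N).
    - exact: divisors_uniq.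
    - move=> d. rewrite mem_filter mem_iota -dvdn_divisors //.
      apply/andP/idP => [[]//|dg]. split => //.
      have := dvdn_leq g0 dg. have := dvdn_gt0 g0 dg. move=> a b. apply/andP; split; lia.
  rewrite big_seq (eq_bigr (JmJ s N)); last first.
    move=> d. rewrite -dvdn_divisors // => dg. apply: Jordan_Jm.
    exact: dvdn_gt0 dg. have := dvdn_leq g0 dg. lia.
  rewrite -big_seq. exact: divsum.
Qed.
Lemma jordan_divsum s g N : le 1 g /\ le g N ->
  sumR N (fun d => if Nat.eqb (g mod d) 0 then Jordan s d else 0) = Rpower (INR g) s.
Proof. move=> H. apply: jordan_divsum_mc; apply/leP; lia. Qed.
End JMC.

Lemma maxR_ge_list (f : nat -> R) l k : In k l -> f k <= fold_right Rmax 0 (map f l).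
Proof. induction l as [|a l IH]; simpl; [tauto|]. intros [->|H].
  apply Rmax_l. eapply Rle_trans; [apply IH; auto| apply Rmax_r]. Qed.

Lemma maxR_ge n f k : (1 <= k <= n)%nat -> f k <= maxR n f.
Proof. intros. unfold maxR. apply maxR_ge_list. apply in_seq. lia. Qed.

Lemma maxR_nonneg n f : 0 <= maxR n f.
Proof. unfold maxR. induction (seq 1 n) as [|a l IH]; simpl; [lra|].
  eapply Rle_trans; [apply IH|apply Rmax_r]. Qed.

Lemma cs n (a b : nat -> R) :
  sumR n (fun i => a i * b i) * sumR n (fun i => a i * b i) <= nrm n a * nrm n b.
Proof.
  rewrite (Rmult_comm (nrm n a)). apply quad. apply nrm_nonneg. intro t.
  assert (0 <= nrm n (fun i => a i + t * b i)) by apply nrm_nonneg.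
  unfold nrm in *.
  replace (sumR n (fun i => (a i + t * b i) * (a i + t * b i))) with
    (sumR n (fun i => b i * b i) * t * t + 2 * sumR n (fun i => a i * b i) * t + sumR n (fun i => a i * a i)) in H.
  lra. symmetry.
  transitivity (sumR n (fun i => (t * t * (b i * b i) + (2 * t) * (a i * b i)) + a i * a i)).
  apply sumR_ext; intros; ring.
  rewrite !sumR_plus, !sumR_scal. ring.
Qed.

Lemma EtE_bil n v : bil n (EtE n) v v =
  nrm n (fun k => sumR n (fun i => E_mat k i * v i)).
Proof.
  unfold bil, EtE, nrm.
  transitivity (sumR n (fun i => sumR n (fun j => sumR n (fun k => (E_mat k i * v i) * (E_mat k j * v j))))).
  { apply sumR_ext; intros i _. rewrite <- sumR_scal. apply sumR_ext; intros j _.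
    transitivity ((v i * v j) * sumR n (fun k => E_mat k i * E_mat k j)); [ring|].
    rewrite <- sumR_scal. apply sumR_ext; intros; ring. }
  transitivity (sumR n (fun i => sumR n (fun k => sumR n (fun j => (E_mat k i * v i) * (E_mat k j * v j))))).
  { apply sumR_ext; intros. apply sumR_swap. }
  rewrite sumR_swap. apply sumR_ext; intros k _.
  rewrite <- sumR_scal. apply sumR_ext; intros i _.
  match goal with |- _ = ?A * ?B => rewrite (Rmult_comm A B) end.
  rewrite <- sumR_scal. apply sumR_ext; intros; ring.
Qed.

Lemma F1 alpha beta i j : (1 <= i)%nat -> (1 <= j)%nat ->
  A_ab alpha beta i j =
  Rpower (INR i) beta * Rpower (INR (Nat.gcd i j)) (alpha - beta) * Rpower (INR j) beta.
Proof.
  intros Hi Hj. unfold A_ab, Nat.lcm.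
  set (g := Nat.gcd i j).
  assert (g0 : (0 < g)%nat).
  { destruct (Nat.eq_dec g 0) as [E|E]; [|lia]. apply Nat.gcd_eq_0 in E. lia. }
  destruct (Nat.gcd_divide_r i j) as [c Hc]. fold g in Hc.
  assert (c0 : (0 < c)%nat) by (destruct c; lia).
  assert (Hcd : (j / g = c)%nat) by (rewrite Hc; apply Nat.div_mul; lia).
  rewrite Hcd.
  rewrite mult_INR, <- Rpower_mult_distr by (apply lt_0_INR; lia).
  replace (Rpower (INR j) beta) with (Rpower (INR c) beta * Rpower (INR g) beta)
    by (rewrite Rpower_mult_distr, <- mult_INR, <- Hc by (apply lt_0_INR; lia); reflexivity).
  unfold Rminus. rewrite Rpower_plus.
  assert (Rpower (INR g) beta * Rpower (INR g) (- beta) = 1).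
  { rewrite <- Rpower_plus. replace (beta + - beta) with 0 by ring. apply Rpower_O, lt_0_INR; lia. }
  replace (Rpower (INR g) alpha * (Rpower (INR i) beta * Rpower (INR c) beta)) with
   (Rpower (INR g) alpha * (Rpower (INR i) beta * Rpower (INR c) beta) * (Rpower (INR g) beta * Rpower (INR g) (- beta))) by (rewrite H; ring).
  ring.
Qed.

Lemma mod0_div a b : (b <> 0)%nat -> (Nat.eqb (a mod b) 0 = true <-> Nat.divide b a).
Proof. intros. rewrite Nat.eqb_eq. apply Nat.mod_divide; auto. Qed.

Lemma F2 s n i j : (1 <= i <= n)%nat -> (1 <= j <= n)%nat ->
  Rpower (INR (Nat.gcd i j)) s = sumR n (fun k => E_mat i k * E_mat j k * Jordan s k).
Proof.
  intros Hi Hj. rewrite <- (JMC.jordan_divsum s (Nat.gcd i j) n).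
  2:{ split. destruct (Nat.eq_dec (Nat.gcd i j) 0) as [E|E]; [apply Nat.gcd_eq_0 in E; lia|lia].
      pose proof (Nat.divide_pos_le (Nat.gcd i j) i ltac:(lia) (Nat.gcd_divide_l i j)). lia. }
  apply sumR_ext. intros k Hk. unfold E_mat.
  assert (Hk0 : k <> 0%nat) by lia.
  destruct (Nat.eqb (Nat.gcd i j mod k) 0) eqn:Eg.
  - apply (mod0_div _ _ Hk0) in Eg.
    assert (Nat.divide k i) by (eapply Nat.divide_trans; [apply Eg|apply Nat.gcd_divide_l]).
    assert (Nat.divide k j) by (eapply Nat.divide_trans; [apply Eg|apply Nat.gcd_divide_r]).
    apply (mod0_div _ _ Hk0) in H. apply (mod0_div _ _ Hk0) in H0. rewrite H, H0. ring.
  - destruct (Nat.eqb (i mod k) 0) eqn:Ei; [|ring].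
    destruct (Nat.eqb (j mod k) 0) eqn:Ej; [|ring].
    exfalso. apply (mod0_div _ _ Hk0) in Ei. apply (mod0_div _ _ Hk0) in Ej.
    assert (Nat.eqb (Nat.gcd i j mod k) 0 = true) by (apply (mod0_div _ _ Hk0); apply Nat.gcd_greatest; auto).
    congruence.
Qed.

Lemma DI : dichotomy_stmt.
Proof. intros n B. exact (MC.dichotomy n B). Qed.

Lemma dsq_bound beta n i : (1 <= i <= n)%nat ->
  Rpower (INR i) beta * Rpower (INR i) beta <= Rmax 1 (Rpower (INR n) (2 * beta)).
Proof.
  intros Hi. rewrite <- Rpower_plus. replace (beta + beta) with (2 * beta) by ring.
  assert (1 <= INR i) by (apply (le_INR 1); lia).
  assert (INR i <= INR n) by (apply le_INR; lia).
  destruct (Rle_dec 0 (2 * beta)).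
  - eapply Rle_trans; [|apply Rmax_r]. apply Rle_Rpower_l; auto. lra.
  - eapply Rle_trans; [|apply Rmax_l]. rewrite <- (Rpower_O (INR i)) by lra.
    apply Rle_Rpower; auto. lra.
Qed.

Theorem corollary3p3 (n : nat) (alpha beta lam T : R) :
  (1 <= n)%nat ->
  IsLargestEigenvalue n (EtE n) T ->
  IsEigenvalue n (A_ab alpha beta) lam ->
  Rabs lam <= T * Rmax 1 (Rpower (INR n) (2 * beta)) *
              maxR n (fun i => Rabs (Jordan (alpha - beta) i)).
Proof.
  intros Hn HT [x [[i0 [Hi0 Hx0]] Hx]].
  set (s := alpha - beta).
  set (m := maxR n (fun i => Rabs (Jordan s i))).
  set (c := Rmax 1 (Rpower (INR n) (2 * beta))).
  set (d := fun i => Rpower (INR i) beta).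
  set (y := fun i => d i * x i).
  set (w := fun k => sumR n (fun i => E_mat i k * y i)).
  assert (Hsym : forall i j, (1<=i<=n)%nat -> (1<=j<=n)%nat -> EtE n i j = EtE n j i).
  { intros. unfold EtE. apply sumR_ext. intros; ring. }
  pose proof (rayleigh DI n (EtE n) T Hn Hsym HT) as HR.
  assert (T0 : 0 <= T).
  { specialize (HR e1). rewrite e1_nrm in HR by auto. rewrite EtE_bil in HR.
    pose proof (nrm_nonneg n (fun k => sumR n (fun i => E_mat k i * e1 i))). lra. }
  assert (m0 : 0 <= m) by apply maxR_nonneg.
  assert (S12 : lam * nrm n x = sumR n (fun k => Jordan s k * (w k * w k))).
  { transitivity (sumR n (fun i => x i * sumR n (fun j => A_ab alpha beta i j * x j))).
    { unfold nrm. rewrite <- sumR_scal. apply sumR_ext. intros i Hi. rewrite Hx by auto. ring. }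
    transitivity (sumR n (fun i => sumR n (fun j => sumR n (fun k =>
       Jordan s k * (E_mat i k * y i) * (E_mat j k * y j))))).
    { apply sumR_ext; intros i Hi. rewrite <- sumR_scal. apply sumR_ext; intros j Hj.
      rewrite F1 by lia. rewrite (F2 (alpha - beta) n i j) by auto. fold s.
      transitivity ((x i * d i * d j * x j) * sumR n (fun k => E_mat i k * E_mat j k * Jordan s k)).
      { unfold d. ring. }
      rewrite <- sumR_scal. apply sumR_ext; intros. unfold y. ring. }
    transitivity (sumR n (fun i => sumR n (fun k => sumR n (fun j =>
       Jordan s k * (E_mat i k * y i) * (E_mat j k * y j))))).
    { apply sumR_ext; intros. apply sumR_swap. }
    rewrite sumR_swap. apply sumR_ext; intros k _.
    transitivity (sumR n (fun i => (Jordan s k * (E_mat i k * y i)) * w k)).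
    { apply sumR_ext; intros i _. unfold w. rewrite Rmult_comm, <- sumR_scal.
      apply sumR_ext; intros; ring. }
    transitivity (sumR n (fun i => (Jordan s k * w k) * (E_mat i k * y i))).
    { apply sumR_ext; intros; ring. }
    rewrite sumR_scal. fold (w k). ring. }
  assert (S3 : Rabs (lam * nrm n x) <= m * nrm n w).
  { rewrite S12. eapply Rle_trans; [apply sumR_abs|]. unfold nrm. rewrite <- (sumR_scal n m).
    apply sumR_le. intros k Hk. rewrite Rabs_mult.
    rewrite (Rabs_pos_eq (w k * w k)) by nra.
    apply Rmult_le_compat_r; [nra|]. unfold m. apply (maxR_ge n (fun i => Rabs (Jordan s i))). auto. }
  assert (S4 : nrm n w <= T * nrm n y).
  { set (u := fun k => sumR n (fun i => E_mat k i * w i)).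
    assert (Hwu : nrm n w = sumR n (fun i => y i * u i)).
    { unfold nrm.
      transitivity (sumR n (fun k => sumR n (fun i => (E_mat i k * y i) * w k))).
      { apply sumR_ext; intros k _.
        transitivity (w k * sumR n (fun i => E_mat i k * y i)); [reflexivity|].
        rewrite <- sumR_scal. apply sumR_ext; intros; ring. }
      rewrite sumR_swap. apply sumR_ext; intros i _.
      transitivity (y i * sumR n (fun k => E_mat i k * w k)); [|reflexivity].
      rewrite <- sumR_scal. apply sumR_ext; intros; ring. }
    assert (Hu : nrm n u <= T * nrm n w) by (unfold u; rewrite <- EtE_bil; apply HR).
    pose proof (cs n y u) as Hcs. rewrite <- Hwu in Hcs.
    pose proof (nrm_nonneg n w). pose proof (nrm_nonneg n y). pose proof (nrm_nonneg n u).
    destruct (Req_dec (nrm n w) 0) as [E|E].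
    - rewrite E. nra.
    - assert (0 < nrm n w) by lra.
      assert (nrm n w * nrm n w <= nrm n y * (T * nrm n w)) by nra.
      nra. }
  assert (S5 : nrm n y <= c * nrm n x).
  { unfold nrm. rewrite <- sumR_scal. apply sumR_le. intros i Hi. unfold y.
    pose proof (dsq_bound beta n i Hi). fold c in H. fold (d i) in H.
    replace (d i * x i * (d i * x i)) with ((d i * d i) * (x i * x i)) by ring.
    apply Rmult_le_compat_r; [nra|auto]. }
  assert (Nx : 0 < nrm n x).
  { pose proof (nrm_coord n x i0 Hi0). assert (0 < x i0 * x i0).
    { destruct (Rlt_dec 0 (x i0)); [nra|]. assert (x i0 < 0) by lra. nra. } lra. }
  rewrite Rabs_mult, (Rabs_pos_eq (nrm n x)) in S3 by lra.
  assert (Rabs lam * nrm n x <= (T * c * m) * nrm n x).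
  { eapply Rle_trans; [apply S3|].
    assert (m * nrm n w <= m * (T * nrm n y)) by (apply Rmult_le_compat_l; auto).
    assert (m * (T * nrm n y) <= m * (T * (c * nrm n x))).
    { apply Rmult_le_compat_l; auto. apply Rmult_le_compat_l; auto. }
    nra. }
  apply Rmult_le_reg_r with (nrm n x); auto.
Qed.
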